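(* Let $G$ be a connected weighted multigraph on the vertex set $V$, $|V|\ge2$, with positive edge weights. Let $\mathcal A\subseteq\mathbb R$ and let $\varphi_\alpha:(0,\infty)\to(0,\infty)$, $\alpha\in\mathcal A$, be a family of functions. For $\alpha\in\mathcal A$ let $G_\alpha$ be obtained from $G$ by replacing each edge weight $w$ by $\varphi_\alpha(w)$, let $L_\alpha$ be the Laplacian matrix of $G_\alpha$, let $Q_\alpha=(I+L_\alpha)^{-1}=(q_{ij}(\alpha))$, and let $\theta_\alpha>0$ be a scaling factor; the logarithmic forest distance is $d^F_\alpha(i,j)=\theta_\alpha\bigl(\tfrac12(\ln q_{ii}(\alpha)+\ln q_{jj}(\alpha))-\ln q_{ij}(\alpha)\bigr)$. Then for every $\alpha\in\mathcal A$ there are a constant $c_\alpha>0$ and a graph $\tilde G_\alpha$ obtained from $G_\alpha$ by multiplying all edge weights by $c_\alpha$ and attaching loops (with positive weights) to some vertices so that its weighted adjacency matrix $A(\alpha)$ has constant row sums, such that the spectral radius of $A(\alpha)$ is less than $1$, $\tilde R_\alpha=\sum_{k\ge0}A(\alpha)^k=(I-A(\alpha))^{-1}=(\tilde r_{ij}(\alpha))$ is finite, and for all $i,j\in V$ $$d^F_\alpha(i,j)=\theta_\alpha\Bigl(\tfrac12\bigl(\ln\tilde r_{ii}(\alpha)+\ln\tilde r_{jj}(\alpha)\bigr)-\ln\tilde r_{ij}(\alpha)\Bigr).$$ Thus the family of logarithmic forest distances coincides with a family of modified walk distances obtained by balancing the graphs $G_\alpha$ by loops.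
   Context: The weighted adjacency matrix $A(H)=(a_{ij})$ of a weighted multigraph $H$ has $a_{ij}$ equal to the sum of the weights of the edges joining $i$ and $j$ (loops included). The Laplacian matrix is $L(H)=\operatorname{diag}(A(H)\mathbf 1)-A(H)$. *)

(* Defs.v *)
From mathcomp Require Import all_boot all_order all_algebra.
From mathcomp Require Import all_classical all_reals all_analysis.
From mathcomp Require Import complex.
Set Implicit Arguments. Unset Strict Implicit. Unset Printing Implicit Defensive.
Import Order.TTheory GRing.Theory Num.Theory.
Local Open Scope ring_scope.

(* A weighted multigraph on the vertex set 'I_n: a finite type E of edges,
   each edge e has endpoints src e, tgt e (src e = tgt e is a loop) and a
   weight w e. *)

(* Weighted adjacency matrix: a_ij = sum of weights of edges joining i and j
   (loops at i contribute once to a_ii). *)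
Definition wadj (R : realType) (n : nat) (E : finType)
  (src tgt : E -> 'I_n) (w : E -> R) : 'M[R]_n :=
  \matrix_(i, j) \sum_(e : E | ((src e == i) && (tgt e == j))
                               || ((src e == j) && (tgt e == i))) w e.

Definition laplacian (R : realType) (n : nat) (A : 'M[R]_n) : 'M[R]_n :=
  diag_mx (\row_i \sum_j A i j) - A.

Definition mg_adjacent (n : nat) (E : finType) (src tgt : E -> 'I_n) : rel 'I_n :=
  fun x y => [exists e : E, ((src e == x) && (tgt e == y))
                           || ((src e == y) && (tgt e == x))].

Definition mg_connected (n : nat) (E : finType) (src tgt : E -> 'I_n) : Prop :=
  forall i j : 'I_n, connect (mg_adjacent src tgt) i j.

Definition eigenvalueC (R : realType) (n : nat) (A : 'M[R]_n) (z : R[i]) : bool :=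
  root (char_poly (map_mx (real_complex R) A)) z.

Definition spectral_radius_lt1 (R : realType) (n : nat) (A : 'M[R]_n) : Prop :=
  forall z : R[i], eigenvalueC A z -> `|z| < 1.

Definition log_dist (R : realType) (n : nat) (theta : R) (M : 'M[R]_n)
  (i j : 'I_n) : R :=
  theta * (2^-1 * (ln (M i i) + ln (M j j)) - ln (M i j)).

Definition forest_dist (R : realType) (n : nat) (theta : R) (A : 'M[R]_n)
  (i j : 'I_n) : R :=
  log_dist theta (invmx (1%:M + laplacian A)) i j.

(* Main.v *)
Require Import Defs.
From mathcomp Require Import all_boot all_order all_algebra.
From mathcomp Require Import all_classical all_reals all_analysis.
From mathcomp Require Import complex.
From mathcomp Require Import ring lra.
Import Order.TTheory GRing.Theory Num.Theory.
Import numFieldNormedType.Exports.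
Local Open Scope ring_scope.
Local Open Scope classical_set_scope.

Section Pow.
Variables (R : realType) (n : nat) (M : 'M[R]_n).

Lemma scal1E (i j : 'I_n) : (1%:M : 'M[R]_n) i j = (i == j)%:R.
Proof. by rewrite mxE. Qed.

Lemma mat1E (i j : 'I_n) : (1 : 'M[R]_n) i j = (i == j)%:R.
Proof. by rewrite mxE. Qed.

Lemma mulE (A B : 'M[R]_n) i j : (A * B) i j = \sum_l A i l * B l j.
Proof. by rewrite -mulmxE mxE. Qed.

Lemma sum_delta (i : 'I_n) (f : 'I_n -> R) : \sum_j f j * (i == j)%:R = f i.
Proof.
rewrite (bigD1 i) //= eqxx mulr1 big1 ?addr0 // => j /negbTE.
by rewrite eq_sym => ->; rewrite mulr0.
Qed.

Hypothesis M0 : forall i j, 0 <= M i j.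

Lemma pow_ge0 N i j : 0 <= (M ^+ N) i j.
Proof.
elim: N i j => [|N IH] i j; first by rewrite expr0 mat1E ler0n.
rewrite exprS mulE; apply: sumr_ge0 => l _; exact: mulr_ge0.
Qed.

Lemma pow_rowsum r : (forall i, \sum_j M i j = r) ->
  forall N i, \sum_j (M ^+ N) i j = r ^+ N.
Proof.
move=> Hr; elim=> [|N IH] i.
  rewrite expr0; under eq_bigr do rewrite mat1E.
  by rewrite -[RHS](sum_delta i (fun _ => 1)); apply: eq_bigr => j _; rewrite mul1r.
rewrite exprS; under eq_bigr do rewrite mulE.
rewrite exchange_big /=.
under eq_bigr do rewrite -mulr_sumr IH.
by rewrite -mulr_suml Hr exprS.
Qed.

Lemma entry_le_sum (f : 'I_n -> R) j : (forall l, 0 <= f l) -> f j <= \sum_l f l.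
Proof.
move=> H; rewrite (bigD1 j) //= lerDl; exact: sumr_ge0.
Qed.

Lemma pow_le r : (forall i, \sum_j M i j = r) ->
  forall N i j, (M ^+ N) i j <= r ^+ N.
Proof.
move=> Hr N i j; rewrite -(pow_rowsum _ Hr N i).
apply: entry_le_sum => l; exact: pow_ge0.
Qed.

Lemma pow_path (e : rel 'I_n) : (forall x y, e x y -> 0 < M x y) ->
  forall p x, path e x p -> 0 < (M ^+ size p) x (last x p).
Proof.
move=> He; elim=> [|y p IH] x /=; first by rewrite expr0 mat1E eqxx ltr01.
case/andP=> exy Hp; rewrite exprS mulE (bigD1 y) //=.
have h1 := He _ _ exy; have h2 := IH _ Hp.
have h3 : 0 <= \sum_(l | l != y) M x l * (M ^+ size p) l (last y p).
  by apply: sumr_ge0 => l _; apply: mulr_ge0 => //; apply: pow_ge0.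
have := mulr_gt0 h1 h2; lra.
Qed.
End Pow.
Section Eig.
Local Open Scope complex_scope.
Variables (R : realType) (n : nat) (M : 'M[R]_n) (r : R).
Hypothesis M0 : forall i j, 0 <= M i j.
Hypothesis Mc : forall j, \sum_i M i j = r.

Lemma normC_def (z : R[i]) : `|z| = (Normc.normc z)%:C.
Proof. by case: z. Qed.

Lemma eig_bound (z : R[i]) (v : 'rV[R[i]]_n) :
  v *m map_mx (real_complex R) M = z *: v -> v != 0 -> `|z| <= r%:C.
Proof.
move=> Hv vn0.
have [i0 _] : exists i0 : 'I_n, true.
  case: n M v Hv vn0 => [|n'] _ v' _ vn0'; last by exists ord0.
  by move: vn0'; rewrite (_ : v' = 0) ?eqxx // ; apply/matrixP => i [].
pose j := [arg max_(j > i0) Normc.normc (v 0 j)]%O.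
have jmax : forall i, `|v 0 i| <= `|v 0 j|.
  rewrite /j; case: arg_maxP => // j' _ Hj i.
  by rewrite !normC_def lecR; apply: Hj.
have m0 : 0 < `|v 0 j|.
  rewrite normr_gt0; apply: contra vn0 => /eqP vj0.
  apply/eqP/matrixP => a b; rewrite [a]ord1 mxE; apply/eqP.
  by rewrite -normr_eq0 eq_le normr_ge0 andbT -(normr0 (R[i])) -vj0 jmax.
have E : z * v 0 j = \sum_i v 0 i * (M i j)%:C.
  by have := congr1 (fun A : 'M[R[i]]_(1,n) => A 0 j) Hv; rewrite !mxE => <-; apply: eq_bigr => i _; rewrite mxE.
have : `|z| * `|v 0 j| <= `|v 0 j| * r%:C.
  rewrite -normrM E; apply: le_trans (ler_norm_sum _ _ _) _.
  rewrite -(Mc j) rmorph_sum mulr_sumr; apply: ler_sum => i _.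
  rewrite normrM (ger0_norm (_ : 0 <= (M i j)%:C)) ?ler0c //.
  by apply: ler_wpM2r; rewrite ?ler0c // jmax.
by rewrite mulrC ler_pM2l.
Qed.
End Eig.

Theorem theorem7 (R : realType) (n : nat) (E : finType)
  (src tgt : E -> 'I_n) (w : E -> R)
  (Aset : set R) (phi : R -> R -> R) (theta : R -> R) :
  (2 <= n)%N ->
  mg_connected src tgt ->
  (forall e, 0 < w e) ->
  (forall alpha, alpha \in Aset -> forall x, 0 < x -> 0 < phi alpha x) ->
  (forall alpha, alpha \in Aset -> 0 < theta alpha) ->
  forall alpha, alpha \in Aset ->
  let Aalpha := wadj src tgt (fun e => phi alpha (w e)) in
  exists c : R, 0 < c /\
  exists loop : 'I_n -> R, (forall v, 0 <= loop v) /\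
  let At := c *: Aalpha + diag_mx (\row_v loop v) in
  (exists s : R, forall i, \sum_j At i j = s) /\
  spectral_radius_lt1 At /\
  (1%:M - At) \in unitmx /\
  (forall i j, (fun N : nat => ((\sum_(k < N) At ^+ k) i j : R)) @ \oo -->
                 (invmx (1%:M - At) i j : R)) /\
  forall i j : 'I_n,
    forest_dist (theta alpha) Aalpha i j =
    log_dist (theta alpha) (invmx (1%:M - At)) i j.
Proof.
move=> n2 conn wpos phipos thpos alpha aA Aalpha.
have A0 : forall i j, 0 <= Aalpha i j.
  move=> i j; rewrite /Aalpha mxE; apply: sumr_ge0 => e _.
  by apply: ltW; apply: phipos.
have Asym : forall i j, Aalpha i j = Aalpha j i.
  by move=> i j; rewrite /Aalpha !mxE; apply: eq_bigl => e; rewrite orbC.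
have Aadj : forall x y, mg_adjacent src tgt x y -> 0 < Aalpha x y.
  move=> x y /existsP [e He]; rewrite /Aalpha mxE (bigD1 e) //=.
  have h1 : 0 < phi alpha (w e) by apply: phipos.
  have h2 : 0 <= \sum_(i | (((src i == x) && (tgt i == y))
                               || ((src i == y) && (tgt i == x))) && (i != e))
              phi alpha (w i).
    by apply: sumr_ge0 => e' _; apply: ltW; apply: phipos.
  lra.
pose D v := \sum_j Aalpha v j.
pose S := \sum_v D v.
have D0 v : 0 <= D v by apply: sumr_ge0.
have S0 : 0 <= S by apply: sumr_ge0.
have DS v : D v <= S by apply: entry_le_sum.
pose k := (1 + S)^-1.
have S1 : 0 < 1 + S by lra.
have k0 : 0 < k by rewrite invr_gt0.
have k1 : k <= 1 by rewrite /k invf_le1 //; lra.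
exists k; split => //.
exists (fun v => 1 - k * (1 + D v)); split.
  move=> v; rewrite subr_ge0 /k mulrC ler_pdivrMr // mul1r; have := DS v; lra.
move=> At.
have AtE i j : At i j = k * Aalpha i j + (1 - k * (1 + D i)) *+ (i == j).
  by rewrite /At !mxE.
have At0 i j : 0 <= At i j.
  rewrite AtE; apply: addr_ge0; first by apply: mulr_ge0; [apply: ltW|apply: A0].
  apply: mulrn_wge0; rewrite subr_ge0 /k mulrC ler_pdivrMr // mul1r; have := DS i; lra.
have Atrow i : \sum_j At i j = 1 - k.
  under eq_bigr do rewrite AtE.
  rewrite big_split /= -mulr_sumr -/(D i).
  have -> : \sum_j (1 - k * (1 + D i)) *+ (i == j) = 1 - k * (1 + D i).
    rewrite (bigD1 i) //= eqxx mulr1n big1 ?addr0 // => j /negbTE.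
    by rewrite eq_sym => ->; rewrite mulr0n.
  ring.
have Atsym i j : At i j = At j i.
  by rewrite !AtE Asym eq_sym; case: eqP => [->|].
have Atcol j : \sum_i At i j = 1 - k.
  by under eq_bigr do rewrite Atsym; apply: Atrow.
have unit : (1%:M - At) \in unitmx.
  apply/negPn/negP => nu.
  have : kermx (1%:M - At) != 0 by rewrite kermx_eq0 row_free_unit.
  case/rowV0Pn => v /sub_kermxP Hv vn0.
  have Hv' : v *m At = v.
    by move: Hv; rewrite mulmxBr mulmx1 => /eqP; rewrite subr_eq0 => /eqP <-.
  have := @eig_bound R n At (1 - k) At0 Atcol 1 (map_mx (real_complex R) v).
  rewrite -map_mxM Hv' scale1r map_mx_eq0 vn0 => /(_ erefl erefl).
  rewrite normr1 -(rmorph1 (real_complex R)) lecR; lra.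
pose P := invmx (1%:M - At).
have rlt : `|1 - k| < 1 by rewrite ger0_norm; lra.
have cv : forall i j, (fun N : nat => ((\sum_(k < N) At ^+ k) i j : R)) @ \oo --> P i j.
  move=> i j.
  have SE N : \sum_(k < N) At ^+ k = P - P *m At ^+ N.
    have H : (1%:M - At) * \sum_(k < N) At ^+ k = 1 - At ^+ N.
      elim: N => [|N IH]; first by rewrite big_ord0 mulr0 expr0 subrr.
      rewrite big_ord_recr /= mulrDr IH mulrBl mul1r -exprS; by rewrite addrA subrK.
    rewrite -[LHS]mul1mx -(mulVmx unit) -mulmxA mulmxE H mulrBr mulr1.
    by rewrite -mulmxE.
  pose C := \sum_l `|P i l|.
  have eb N : `|(P *m At ^+ N) i j| <= C * (1 - k) ^+ N.
    rewrite mxE; apply: le_trans (ler_norm_sum _ _ _) _.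
    rewrite /C mulr_suml; apply: ler_sum => l _.
    rewrite normrM (ger0_norm (@pow_ge0 R n At At0 _ _ _)); apply: ler_wpM2l => //.
    exact: (@pow_le R n At At0 _ Atrow).
  have e0 : (fun N => (P *m At ^+ N) i j) @ \oo --> 0.
    apply: (@squeeze_cvgr _ _ _ _ (fun N => (- C) * (1 - k) ^+ N) (fun N => C * (1 - k) ^+ N)).
    - apply: nearW => N; have := eb N; rewrite ler_norml mulNr; by [].
    - by rewrite -(mulr0 (- C)); apply: cvgMl_tmp; apply: cvg_expr.
    - by rewrite -(mulr0 C); apply: cvgMl_tmp; apply: cvg_expr.
  have -> : (fun N : nat => ((\sum_(k < N) At ^+ k) i j : R)) =
            (fun N => P i j - (P *m At ^+ N) i j).
    by apply: funext => N; rewrite SE !mxE.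
  have := cvgB (cvg_cst (P i j)) e0; rewrite subr0; apply.
have Ppos : forall i j, 0 < P i j.
  move=> i j; have /connectP [p Hp ->] := conn i j.
  have: 0 < (At ^+ size p) i (last i p).
    apply: (@pow_path R n At At0 _ _ _ _ Hp) => x y /Aadj h.
    by rewrite AtE; have := mulr_gt0 k0 h; have := At0 x y; rewrite AtE; move=> h2 h3;
       apply: (lt_le_trans h3); rewrite lerDl mulrn_wge0 // subr_ge0 mulrC ler_pdivrMr // mul1r; have := DS x; lra.
  move=> hp; apply: (lt_le_trans hp).
  have hn : \forall N \near \oo, (At ^+ size p) i (last i p) <=
               (\sum_(k < N) At ^+ k) i (last i p).
    exists (size p).+1 => // N /= HN.
    rewrite summxE; apply: (@entry_le_sum R N (fun l : 'I_N => (At ^+ l) i (last i p)) (Ordinal HN)).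
    by move=> l; apply: (@pow_ge0 R n At At0).
  have := closed_cvg _ (@closed_ge R _) hn _ (cv i (last i p)); apply.
split; first by exists (1 - k).
split.
  move=> z; rewrite /eigenvalueC -eigenvalue_root_char => /eigenvalueP [v Hv vn0].
  apply: le_lt_trans (@eig_bound R n At (1 - k) At0 Atcol z v Hv vn0) _.
  by rewrite -(rmorph1 (real_complex R)) ltcR; lra.
split => //.
split => //.
have LE : 1%:M - At = k *: (1%:M + laplacian Aalpha).
  apply/matrixP => i j; rewrite /laplacian /D /Aalpha !mxE.
  case: eqP => [<-|_] /=; rewrite ?mulr1n ?mulr0n; rewrite /D /=; ring.
have U2 : (1%:M + laplacian Aalpha) \in unitmx.
  by move: unit; rewrite LE unitmxZ // unitfE gt_eqF.
have QE a b : invmx (1%:M + laplacian Aalpha) a b = k * P a b.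
  rewrite /P LE invmxZ ?unitmxZ ?unitfE ?gt_eqF // mxE mulrA mulfV ?gt_eqF // mul1r //.
move=> i j; rewrite /forest_dist /log_dist !QE !lnM ?posrE //.
field; by [].
Qed.
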